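(* For every $\epsilon>0$, every integer $k\ge1$ and every finite set $U$ with $|U|\ge k$ there is a constant $C_1=C_1(|U|,k,\epsilon)$ such that the following holds. Let $\{X_u\}_{u\in U}$ be finite non-empty sets, let $X_V=\prod_{u\in V}X_u$ for $V\subset U$, and let $\mathcal U_k$ be the collection of subsets of $U$ of cardinality exactly $k$. For each $V\in\mathcal U_k$ let $S_V\subset X_V$ satisfy $$\big\|S_V-\mathbb P(S_V)\big\|_{\Box^V(X_V)}\le\big(\tfrac12\mathbb P(S_V)\big)^{C_1},\qquad V\in\mathcal U_k .$$ Then $$\Big|\mathbb E_{x\in X_U}\prod_{V\in\mathcal U_k}S_V(x_V)-\prod_{V\in\mathcal U_k}\mathbb E_{x_V\in X_V}S_V(x_V)\Big|\le\epsilon\prod_{V\in\mathcal U_k}\mathbb E_{x_V\in X_V}S_V(x_V).$$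
   Context: Sets are identified with their indicator functions; $\mathbb E_{x\in X}$ denotes the uniform average over a finite set $X$, and $\mathbb P(S_V)=|S_V|/|X_V|$. For $x=(x_u)_{u\in U}\in X_U$ and $V\subset U$, $x_V=(x_u)_{u\in V}$. For a non-empty finite index set $V$ and $f:X_V\to\mathbb C$, the Gowers box norm is defined by $$\|f\|_{\Box^V(X_V)}^{2^{|V|}}=\mathbb E_{x^0,x^1\in X_V}\prod_{\omega\in\{0,1\}^V}\mathcal C^{|\omega|}f(x^{\omega}),$$ where $x^{\omega}=(x^{\omega_v}_v)_{v\in V}$, $|\omega|=\sum_v\omega_v$, and $\mathcal C$ is complex conjugation. (For real $f$ the conjugations can be ignored.) *)

(* Defs.v *)
From HB Require Import structures.
From mathcomp Require Import all_boot all_order all_algebra.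
From mathcomp Require Import all_classical all_reals all_analysis.
Set Implicit Arguments. Unset Strict Implicit. Unset Printing Implicit Defensive.
Import Order.TTheory GRing.Theory Num.Theory.
Local Open Scope ring_scope.

Section Defs.
Variable R : realType.
Variables (U : finType) (X : U -> finType).

(* X_V = prod_{u in V} X_u, as dependent finite functions on the elements of V *)
Definition XV (V : {set U}) : finType := {dffun forall i : {u : U | u \in V}, X (val i)}.

Definition XU : finType := {dffun forall u : U, X u}.

Definition restr (V : {set U}) (x : XU) : XV V := [ffun i => x (val i)].

Definition avg (T : finType) (f : T -> R) : R := (\sum_(t : T) f t) / #|T|%:R.

Definition dens (T : finType) (S : {set T}) : R := #|S|%:R / #|T|%:R.

Definition mixpt (V : {set U}) (om : {ffun {u : U | u \in V} -> bool}) (x0 x1 : XV V) : XV V :=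
  [ffun i => if om i then x1 i else x0 i].

(* ||f||_{Box^V}^{2^|V|} for real-valued f (conjugations are trivial) *)
Definition boxpow (V : {set U}) (f : XV V -> R) : R :=
  avg (fun p : XV V * XV V =>
    \prod_(om : {ffun {u : U | u \in V} -> bool}) f (mixpt om p.1 p.2)).

Definition boxnorm (V : {set U}) (f : XV V -> R) : R :=
  powR (boxpow f) (2 ^+ #|V|)^-1.
End Defs.

(* Main.v *)
Require Import Defs.
From HB Require Import structures.
From mathcomp Require Import all_boot all_order all_algebra.
From mathcomp Require Import all_classical all_reals all_analysis.
From mathcomp Require Import ring lra.
Set Implicit Arguments. Unset Strict Implicit. Unset Printing Implicit Defensive.
Import Order.TTheory GRing.Theory Num.Theory.
Local Open Scope ring_scope.

Section Core.
Variable R : realType.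
Variables (U : finType) (X : U -> finType).
Local Notation XU := (XU X).
Local Notation avg := (@avg R).

Definition mixf (A : {set U}) (x y : XU) : XU :=
  [ffun v => if v \in A then y v else x v].

Lemma mixfE A x y v : mixf A x y v = if v \in A then y v else x v.
Proof. by rewrite ffunE. Qed.

Definition Om := (XU * XU)%type.
Definition pt (w : {set U}) (z : Om) : XU := mixf w z.1 z.2.
Definition Rs (u : U) (z w : Om) : Om := (mixf [set u] z.1 w.1, mixf [set u] z.2 w.2).

Lemma Rs_invol u z w : Rs u (Rs u z w) (Rs u w z) = z.
Proof.
move: z w => [z1 z2] [w1 w2]; rewrite /Rs /=; congr pair; apply/ffunP => v;
rewrite !mixfE; by case: (v \in [set u]).
Qed.

Lemma avg2 (T1 T2 : finType) (F : T1 * T2 -> R) :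
  avg F = avg (fun x => avg (fun y => F (x, y))).
Proof.
rewrite /Defs.avg card_prod natrM invfM.
rewrite -(mulr_suml _ _ _ (GRing.inv (#|T2|%:R : R))) -mulrA [_^-1 * _]mulrC.
by congr (_ * _); rewrite pair_bigA /=; apply: eq_bigr => -[].
Qed.

Lemma avg_const (T : finType) (c : R) : (0 < #|T|)%N -> avg (fun _ : T => c) = c.
Proof.
move=> h; rewrite /Defs.avg sumr_const -[c *+ _]mulr_natr -mulrA divff ?mulr1 //.
by rewrite pnatr_eq0 -lt0n.
Qed.

Lemma eq_avg (T : finType) (F G : T -> R) : F =1 G -> avg F = avg G.
Proof. by move=> h; rewrite /Defs.avg; under eq_bigr do rewrite h. Qed.

Lemma avg_reindex (T : finType) (h : T -> T) (F : T -> R) :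
  injective h -> avg F = avg (fun t => F (h t)).
Proof. by move=> hi; rewrite /Defs.avg (reindex_inj hi). Qed.

Hypothesis XUne : (0 < #|XU|)%N.

Lemma Omne : (0 < #|{: Om}|)%N.
Proof. by rewrite card_prod muln_gt0 XUne. Qed.

Lemma resample u (f : Om -> R) :
  avg f = avg (fun z => avg (fun w => f (Rs u z w))).
Proof.
rewrite -(avg2 (fun p : Om * Om => f (Rs u p.1 p.2))).
rewrite (@avg_reindex _ (fun p : Om * Om => (Rs u p.1 p.2, Rs u p.2 p.1))
   (fun p => f (Rs u p.1 p.2))) /=; last first.
  apply: (@can_inj _ _ _ (fun p : Om * Om => (Rs u p.1 p.2, Rs u p.2 p.1))).
  by move=> [z w] /=; rewrite !Rs_invol.
rewrite (eq_avg (G := fun p : Om * Om => f p.1)); last by move=> p; rewrite Rs_invol.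
rewrite (avg2 (fun p : Om * Om => f p.1)) /=.
by apply: eq_avg => z; rewrite avg_const ?Omne.
Qed.

Lemma avgD (T : finType) (F G : T -> R) :
  avg (fun t => F t + G t) = avg F + avg G.
Proof. by rewrite /Defs.avg big_split mulrDl. Qed.

Lemma avgZ (T : finType) (c : R) (F : T -> R) :
  avg (fun t => c * F t) = c * avg F.
Proof. by rewrite /Defs.avg -mulr_sumr mulrA. Qed.

Lemma avgN (T : finType) (F : T -> R) :
  avg (fun t => - F t) = - avg F.
Proof. by rewrite /Defs.avg sumrN mulNr. Qed.

Lemma avg_ge0 (T : finType) (F : T -> R) : (forall t, 0 <= F t) -> 0 <= avg F.
Proof. by move=> h; rewrite /Defs.avg divr_ge0 // sumr_ge0. Qed.

Lemma avg_le (T : finType) (F G : T -> R) : (forall t, F t <= G t) -> avg F <= avg G.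
Proof. by move=> h; rewrite /Defs.avg; apply: ler_wpM2r; [rewrite invr_ge0 | exact: ler_sum]. Qed.

Lemma avg_abs (T : finType) (F : T -> R) : `|avg F| <= avg (fun t => `|F t|).
Proof.
rewrite /Defs.avg normrM [`|_^-1|]ger0_norm ?invr_ge0 //.
by apply: ler_wpM2r; [rewrite invr_ge0 | exact: ler_norm_sum].
Qed.

Lemma jensen (T : finType) (F : T -> R) : (0 < #|T|)%N ->
  avg F ^+ 2 <= avg (fun t => F t ^+ 2).
Proof.
move=> hT; set m := avg F.
have h0 : 0 <= avg (fun t => (F t - m) ^+ 2) by apply: avg_ge0 => t; exact: sqr_ge0.
have e : avg (fun t => (F t - m) ^+ 2) =
  avg (fun t => F t ^+ 2) + (- (2 * m) * m + m ^+ 2).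
  rewrite -[in RHS](avg_const (m ^+ 2) hT) -/m.
  rewrite -[X in _ + (_ * X + _)]/(avg F) -avgZ -avgD -avgD.
  by apply: eq_avg => t /=; ring.
by move: h0; rewrite e; nra.
Qed.

Lemma XUne' : (0 < #|{: XU}|)%N. Proof. exact: XUne. Qed.

Lemma avg_fst (G : XU -> R) : avg (fun w : Om => G w.1) = avg G.
Proof.
rewrite (avg2 (fun w : Om => G w.1)) /=.
by apply: eq_avg => y; rewrite avg_const.
Qed.

Lemma avg_prod (G H : XU -> R) :
  avg (fun w : Om => G w.1 * H w.2) = avg G * avg H.
Proof.
rewrite (avg2 (fun w : Om => G w.1 * H w.2)) /=.
rewrite (eq_avg (G := fun x => avg H * G x)); last by move=> x; rewrite avgZ mulrC.
by rewrite avgZ mulrC.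
Qed.

Lemma cs_step u (A B B' : Om -> R) :
  (forall z, 0 <= A z <= 1) ->
  (forall z w, A (Rs u z w) = A z) ->
  (forall z w, B (Rs u z w) = B (Rs u z (w.1, w.1))) ->
  (forall z w, B' (Rs u z w) = B (Rs u z (w.2, w.2))) ->
  avg (fun z => A z * B z) ^+ 2 <= avg (fun z => B z * B' z).
Proof.
move=> A01 Ainv Binv B'inv.
pose b z := avg (fun y : XU => B (Rs u z (y, y))).
have E1 : avg (fun z => A z * B z) = avg (fun z => A z * b z).
  rewrite (resample u); apply: eq_avg => z.
  rewrite -avgZ -avg_fst; apply: eq_avg => w.
  by rewrite Ainv Binv.
have E2 : avg (fun z => B z * B' z) = avg (fun z => b z ^+ 2).
  rewrite (resample u); apply: eq_avg => z.
  rewrite expr2 -avg_prod; apply: eq_avg => w.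
  by rewrite Binv B'inv.
rewrite E1 E2; apply: le_trans (jensen _ Omne) _.
apply: avg_le => z; rewrite exprMn ler_piMl ?sqr_ge0 //.
have /andP[h0 h1] := A01 z.
by rewrite expr2 mulr_ile1.
Qed.

Lemma prod_powersetU1 (F : {set U} -> R) (u : U) (W : {set U}) : u \notin W ->
  \prod_(w in powerset (u |: W)) F w =
  \prod_(w in powerset W) F w * \prod_(w in powerset W) F (u |: w).
Proof.
move=> uW; rewrite (big_setID [set w : {set U} | u \in w]) /= mulrC.
congr (_ * _).
  apply: eq_bigl => w; rewrite !inE.
  apply/andP/idP => [[uw sw]|sw].
    apply/fintype.subsetP => v vw; have := fintype.subsetP sw v vw; rewrite !inE.
    by case/orP => // /eqP vu; move: uw; rewrite -vu vw.
  split; first by apply/negP => uw; move: (fintype.subsetP sw u uw); rewrite (negbTE uW).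
  exact: fintype.subset_trans sw (finset.subsetUr _ _).
have -> : powerset (u |: W) :&: [set w : {set U} | u \in w] = [set u |: w | w in powerset W].
  apply/setP => w; rewrite !inE.
  apply/andP/imsetP.
    move=> [sw uw]; exists (w :\ u); last by rewrite finset.setD1K.
    rewrite powersetE; apply/fintype.subsetP => v; rewrite !inE => /andP[vu vw].
    by have := fintype.subsetP sw v vw; rewrite !inE (negbTE vu).
  move=> [w' + ->]; rewrite powersetE => sw'; split; last by rewrite !inE eqxx.
  exact: finset.setUS.
rewrite big_imset //= => w1 w2; rewrite !powersetE => s1 s2 e.
apply/setP => v; have := congr1 (fun s : {set U} => v \in s) e; rewrite /= !inE.
have [->|//] := eqVneq v u.
have n1 : u \notin w1 by apply/negP => /(fintype.subsetP s1); rewrite (negbTE uW).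
have n2 : u \notin w2 by apply/negP => /(fintype.subsetP s2); rewrite (negbTE uW).
by rewrite (negbTE n1) (negbTE n2).
Qed.

Definition swp (u : U) (z : Om) : Om := (mixf [set u] z.1 z.2, z.2).

Lemma pt_Rs (u : U) (w : {set U}) (z y : Om) : pt w (Rs u z y) = mixf [set u] (pt w z) (pt w y).
Proof.
apply/ffunP => v; rewrite /pt /Rs /swp /= !mixfE ?inE.
have [->|nvu] := eqVneq v u; rewrite ?eqxx ?(negbTE nvu) /= ?mixfE ?inE ?eqxx ?(negbTE nvu) //=.
Qed.

Lemma pt_Rs1 (u : U) (w : {set U}) (z y : Om) : u \notin w -> pt w (Rs u z y) = pt w (Rs u z (y.1, y.1)).
Proof.
move=> uw; apply/ffunP => v; rewrite /pt /Rs /swp /= !mixfE ?inE.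
have [->|nvu] := eqVneq v u; rewrite ?(negbTE uw) ?eqxx ?(negbTE nvu) /= ?mixfE ?inE ?eqxx ?(negbTE nvu) //=.
Qed.

Lemma pt_Rs2 (u : U) (w : {set U}) (z y : Om) : u \notin w ->
  pt w (swp u (Rs u z y)) = pt w (Rs u z (y.2, y.2)).
Proof.
move=> uw; apply/ffunP => v; rewrite /pt /Rs /swp /= !mixfE ?inE.
have [->|nvu] := eqVneq v u; rewrite ?(negbTE uw) ?eqxx ?(negbTE nvu) /= ?mixfE ?inE ?eqxx ?(negbTE nvu) //=.
Qed.

Lemma pt_swp (u : U) (w : {set U}) (z : Om) : u \notin w -> pt w (swp u z) = pt (u |: w) z.
Proof.
move=> uw; apply/ffunP => v; rewrite /pt /Rs /swp /= !mixfE ?inE.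
have [->|nvu] := eqVneq v u; rewrite ?(negbTE uw) ?eqxx ?(negbTE nvu) /= ?mixfE ?inE ?eqxx ?(negbTE nvu) //=.
Qed.

Definition MW (Phi : XU -> R) (H : U -> XU -> R) (W : {set U}) (z : Om) : R :=
  \prod_(w in powerset W) (Phi (pt w z) * \prod_(v | v \notin W) H v (pt w z)).

Lemma notin_sub (u : U) (w W : {set U}) : u \notin W -> w \in powerset W -> u \notin w.
Proof.
rewrite powersetE => uW sw; apply/negP => /(fintype.subsetP sw).
by rewrite (negbTE uW).
Qed.

Lemma step Phi H (u : U) (W : {set U}) :
  (forall v x, 0 <= H v x <= 1) ->
  (forall v x y, H v (mixf [set v] x y) = H v x) ->
  u \notin W -> avg (MW Phi H W) ^+ 2 <= avg (MW Phi H (u |: W)).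
Proof.
move=> H01 Hinv uW.
pose K x := Phi x * \prod_(v | v \notin u |: W) H v x.
pose A z := \prod_(w in powerset W) H u (pt w z).
pose B z := \prod_(w in powerset W) K (pt w z).
have eM : forall z, MW Phi H W z = A z * B z.
  move=> z; rewrite /MW /A /B -big_split /=; apply: eq_bigr => w _.
  rewrite /K (bigD1 u) //= mulrCA; congr (_ * (_ * _)).
  by apply: eq_bigl => v; rewrite !inE negb_or andbC.
have eM' : forall z, MW Phi H (u |: W) z = B z * B (swp u z).
  move=> z; rewrite /MW prod_powersetU1 //; congr (_ * _).
  apply: eq_bigr => w ww; rewrite pt_swp //; exact: notin_sub ww.
rewrite (eq_avg eM) (eq_avg eM'); apply: (@cs_step u A B (fun z => B (swp u z))).
- move=> z; rewrite /A; apply/andP; split.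
    by apply: prodr_ge0 => w _; case/andP: (H01 u (pt w z)).
  by apply: prodr_ile1 => w _; exact: H01.
- by move=> z y; rewrite /A; apply: eq_bigr => w _; rewrite pt_Rs Hinv.
- move=> z y; rewrite /B; apply: eq_bigr => w ww.
  by rewrite pt_Rs1 //; exact: notin_sub ww.
- move=> z y; rewrite /B; apply: eq_bigr => w ww.
  by rewrite pt_Rs2 //; exact: notin_sub ww.
Qed.

Lemma MW0 Phi H z : MW Phi H finset.set0 z = Phi z.1 * \prod_v H v z.1.
Proof.
have e : pt finset.set0 z = z.1 by apply/ffunP => v; rewrite mixfE inE.
rewrite /MW powerset0 big_set1 e; congr (_ * _).
by apply: eq_bigl => v; rewrite inE.
Qed.

Lemma core Phi H :
  (forall v x, 0 <= H v x <= 1) ->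
  (forall v x y, H v (mixf [set v] x y) = H v x) ->
  forall W : {set U}, `|avg (fun x => Phi x * \prod_v H v x)| ^+ (2 ^ #|W|)
            <= `|avg (MW Phi H W)|.
Proof.
move=> H01 Hinv W; move: {2}#|W| (erefl #|W|) => n.
elim: n W => [|n IH] W hW.
  rewrite (cards0_eq hW) cards0 expn0 expr1 (eq_avg (MW0 Phi H)).
  by rewrite (avg_fst (fun x => Phi x * \prod_v H v x)).
have /set0Pn [u uW] : W != finset.set0 by rewrite -card_gt0 hW.
have hW' : #|W :\ u| = n by move: hW; rewrite (cardsD1 u W) uW add1n => -[].
have nu : u \notin W :\ u by rewrite !inE eqxx.
have := IH _ hW'; rewrite hW' => ih.
have eW : W = u |: (W :\ u) by rewrite finset.setD1K.
rewrite hW [in X in _ <= X]eW.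
rewrite expnS mulnC exprM.
have st := le_trans (@step Phi H u (W :\ u) H01 Hinv nu) (ler_norm _).
apply: le_trans st.
set a := `|_| ^+ _ in ih *.
set m := avg _ in ih *.
have a0 : 0 <= a by rewrite exprn_ge0.
rewrite -(real_normK (num_real m)); have m0 : 0 <= `|m| by [].
by rewrite !expr2; apply: ler_pM.
Qed.
Definition extg (V : {set U}) (p : XV X V) (x : XU) (v : U) (b : bool) :
  (v \in V = b) -> X v :=
  if b as b' return (v \in V = b' -> X v) then fun h => p (exist _ v h)
  else fun _ => x v.
Definition extf (V : {set U}) (p : XV X V) (x : XU) (v : U) : X v :=
  @extg V p x v (v \in V) (erefl _).

Lemma extf_in (V : {set U}) p x (v : U) (h : v \in V) : @extf V p x v = p (exist _ v h).
Proof.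
have : forall b (e : (v \in V) = b), b = true -> @extg V p x v b e = p (exist _ v h).
  by move=> [] e //= _; rewrite (bool_irrelevance e h).
by apply.
Qed.
Lemma extf_out (V : {set U}) p x (v : U) (h : v \notin V) : @extf V p x v = x v.
Proof.
have : forall b (e : (v \in V) = b), b = false -> @extg V p x v b e = x v.
  by move=> [] e.
by apply; apply/negbTE.
Qed.
Definition ext (V : {set U}) (p : XV X V) (x : XU) : XU := [ffun v => extf p x v].
Lemma restr_ext (V : {set U}) p x : restr V (@ext V p x) = p.
Proof. apply/ffunP => -[v h]; rewrite !ffunE /= extf_in. by []. Qed.
Lemma ext_restr (V : {set U}) p x : @ext V (restr V x) (@ext V p x) = x.
Proof.
apply/ffunP => v; rewrite ffunE; have [h|h] := boolP (v \in V).
  by rewrite extf_in ffunE.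
by rewrite extf_out // ffunE extf_out.
Qed.

Lemma XVne (V : {set U}) : (0 < #|{: XV X V}|)%N.
Proof.
have /card_gt0P [x0 _] := XUne; apply/card_gt0P; exists (restr V x0).
by rewrite inE.
Qed.

Lemma marginal (V : {set U}) (g : XV X V -> R) :
  avg (fun x : XU => g (restr V x)) = avg g.
Proof.
have e1 : avg (fun x : XU => g (restr V x)) =
          avg (fun q : XU * XV X V => g (restr V q.1)).
  rewrite (avg2 (fun q : XU * XV X V => g (restr V q.1))) /=.
  by apply: eq_avg => x; rewrite avg_const // XVne.
rewrite e1 (@avg_reindex _ (fun q : XU * XV X V => (ext q.2 q.1, restr V q.1))); last first.
  apply: (@can_inj _ _ _ (fun q : XU * XV X V => (ext q.2 q.1, restr V q.1))).
  by move=> [x p] /=; rewrite ext_restr restr_ext.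
rewrite (eq_avg (G := fun q : XU * XV X V => g q.2)); last by move=> q /=; rewrite restr_ext.
rewrite (avg2 (fun q : XU * XV X V => g q.2)) /=.
by rewrite avg_const.
Qed.

Definition omOf (V : {set U}) (w : {set U}) : {ffun {u : U | u \in V} -> bool} :=
  [ffun i => val i \in w].
Definition setOf (V : {set U}) (om : {ffun {u : U | u \in V} -> bool}) : {set U} :=
  val @: [set i | om i].

Lemma prod_om (V : {set U}) (F : {ffun {u : U | u \in V} -> bool} -> R) :
  \prod_om F om = \prod_(w in powerset V) F (omOf V w).
Proof.
rewrite (reindex_onto (omOf V) (@setOf V)); last first.
  move=> om _; apply/ffunP => i; rewrite ffunE /setOf.
  by rewrite (mem_imset _ _ val_inj) inE.
apply: eq_bigl => w; rewrite powersetE /=.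
apply/eqP/idP => [<-|sw].
  by apply/fintype.subsetP => v /imsetP [i _ ->]; exact: valP i.
apply/setP => v; apply/imsetP/idP => [[i]|vw].
  by rewrite inE ffunE => iw ->.
by exists (exist _ v (fintype.subsetP sw v vw)); rewrite // inE ffunE.
Qed.

Lemma restr_pt (V : {set U}) (w : {set U}) (z : Om) :
  restr V (pt w z) = mixpt (omOf V w) (restr V z.1) (restr V z.2).
Proof. by apply/ffunP => i; rewrite !ffunE. Qed.

Lemma box_MW (V : {set U}) (f : XV X V -> R) :
  avg (fun z : Om => \prod_(w in powerset V) f (restr V (pt w z))) = boxpow f.
Proof.
rewrite /boxpow.
have e : forall z : Om, \prod_(w in powerset V) f (restr V (pt w z)) =
  (fun p : XV X V * XV X V => \prod_om f (mixpt om p.1 p.2)) (restr V z.1, restr V z.2).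
  by move=> z /=; rewrite prod_om; apply: eq_bigr => w _; rewrite restr_pt.
rewrite (eq_avg e).
set G := fun p : XV X V * XV X V => _.
rewrite (avg2 (fun z : Om => G (restr V z.1, restr V z.2))) /= (avg2 G).
rewrite -(marginal (fun p => avg (fun q => G (p, q)))).
apply: eq_avg => x /=.
exact: (marginal (fun q => G (restr V x, q))).
Qed.

Lemma MW_box (V : {set U}) (f : XV X V -> R) (H : U -> XU -> R) :
  (forall v x, v \notin V -> H v x = 1) ->
  avg (MW (fun x => f (restr V x)) H V) = boxpow f.
Proof.
move=> H1; rewrite -box_MW; apply: eq_avg => z; rewrite /MW.
apply: eq_bigr => w _; rewrite big1 ?mulr1 // => v vV; exact: H1.
Qed.

Lemma boxpow_ge0 (V : {set U}) (f : XV X V -> R) : V != finset.set0 -> 0 <= boxpow f.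
Proof.
case/set0Pn => u uV.
have nu : u \notin V :\ u by rewrite !inE eqxx.
have H01 : forall (v : U) (x : XU), 0 <= (1 : R) <= 1 by move=> *; rewrite lexx ler01.
have Hinv : forall (v : U) (x y : XU), (fun _ _ => 1 : R) v (mixf [set v] x y) = (fun _ _ => 1 : R) v x by [].
have := @step (fun x => f (restr V x)) (fun _ _ => 1) u (V :\ u) H01 Hinv nu.
rewrite finset.setD1K // MW_box //.
by apply: le_trans; exact: sqr_ge0.
Qed.

Lemma vonN (V : {set U}) (f : XV X V -> R) (H : U -> XU -> R) :
  V != finset.set0 ->
  (forall v x, 0 <= H v x <= 1) ->
  (forall v x y, H v (mixf [set v] x y) = H v x) ->
  (forall v x, v \notin V -> H v x = 1) ->
  `|avg (fun x => f (restr V x) * \prod_v H v x)| <= boxnorm f.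
Proof.
move=> V0 H01 Hinv H1.
have := core (fun x => f (restr V x)) H01 Hinv V.
rewrite MW_box // [`|boxpow f|]ger0_norm ?boxpow_ge0 //.
set a := `|avg _|; set n := #|V| => ha.
have a0 : 0 <= a by rewrite /a normr_ge0.
have N0 : (0 : R) < 2 ^+ n by rewrite exprn_gt0.
have -> : a = powR (a ^+ (2 ^ n)) (2 ^+ n)^-1.
  rewrite -powR_mulrn // -powRrM natrX divff ?powRr1 //.
rewrite /boxnorm -/n; apply: ge0_ler_powR => //.
all: try by rewrite ?nnegrE ?invr_ge0 ?ltW ?exprn_ge0 ?boxpow_ge0.
- by rewrite nnegrE exprn_ge0.
- by rewrite nnegrE boxpow_ge0.
Qed.
End Core.

Section Main.
Variable R : realType.
Variables (U : finType) (X : U -> finType).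
Hypothesis XUne : (0 < #|XU X|)%N.
Variable S : forall V : {set U}, {set XV X V}.
Variables (k N : nat) (c : R).
Hypothesis c0 : 0 <= c.
Hypothesis Nbig : (#|{: {set U}}| <= N)%N.
Hypothesis k1 : (1 <= k)%N.
Hypothesis hb : forall V : {set U}, #|V| = k ->
  boxnorm (fun y : XV X V => (y \in S V)%:R - dens R (S V)) <= c * dens R (S V) ^+ N.

Definition ind (V : {set U}) (x : XU X) : R := ((restr V x \in S V)%:R : R).
Definition dd (V : {set U}) : R := avg (fun y : XV X V => ((y \in S V)%:R : R)).

Lemma dd_dens V : dd V = dens R (S V).
Proof.
rewrite /dd /Defs.avg /dens; congr (_ / _).
rewrite (eq_bigr (fun y => if y \in S V then 1 else 0)); last by move=> y _; case: (y \in S V).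
by rewrite -big_mkcond /= sumr_const.
Qed.

Lemma dd01 V : 0 <= dd V <= 1.
Proof.
apply/andP; split; first by apply: avg_ge0 => y; case: (y \in S V).
rewrite -(avg_const (1 : R) (XVne XUne V)); apply: avg_le => y.
by case: (y \in S V).
Qed.

Lemma ind01 V x : 0 <= ind V x <= 1.
Proof. by rewrite /ind; case: (restr V x \in S V); rewrite ?lexx ?ler01. Qed.

Lemma ind_inv (V : {set U}) (v : U) x y : v \notin V -> ind V (mixf [set v] x y) = ind V x.
Proof.
move=> vV; rewrite /ind.
have -> : restr V (mixf [set v] x y) = restr V x; last by [].
apply/ffunP => i; rewrite !ffunE ?mixfE inE.
case: eqP => // e; move: vV; rewrite -e; by rewrite (valP i).
Qed.

Lemma claim n : forall G : {set {set U}}, #|G| = n -> (forall V, V \in G -> #|V| = k) ->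
  `|avg (fun x => \prod_(V in G) ind V x) - \prod_(V in G) dd V|
    <= c * n%:R * \prod_(V in G) dd V.
Proof.
elim: n => [|n IH] G hG hk.
  rewrite (cards0_eq hG) big_set0 (eq_avg (G := fun _ => 1)); last by move=> x; rewrite big_set0.
  rewrite avg_const // subrr normr0.
  by rewrite mulr0n mulr0 mul0r.
have /card_gt0P [V0 V0G] : (0 < #|G|)%N by rewrite hG.
case: (@arg_minP _ _ _ V0 (mem G) dd V0G) => Vs VsG Vsmin.
have {}VsG : Vs \in G by exact: VsG.
have VsK : #|Vs| = k := hk _ VsG.
set G' := G :\ Vs.
have hG' : #|G'| = n by move: hG; rewrite (cardsD1 Vs G) VsG add1n => -[].
have hk' : forall V, V \in G' -> #|V| = k by move=> V; rewrite !inE => /andP[_ /hk].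
have IH' := IH G' hG' hk'.
have /card_gt0P [u0 _] : (0 < #|Vs|)%N by rewrite VsK.
pose p V := odflt u0 [pick v in Vs :\: V].
have pP : forall V, V \in G' -> p V \in Vs :\: V.
  move=> V VG'; rewrite /p; case: pickP => [v //|h].
  have /eqP e0 : Vs :\: V == finset.set0 by apply/eqP/setP => v; rewrite h inE.
  have : Vs == V by rewrite eqEcard -finset.setD_eq0 e0 eqxx (hk' V VG') VsK leqnn.
  by move: VG'; rewrite !inE => /andP[nV _] /eqP eV; move: nV; rewrite eV eqxx.
pose H v x := \prod_(V in G' | p V == v) ind V x.
pose P x := \prod_(V in G') ind V x.
pose D' := \prod_(V in G') dd V.
set ds := dd Vs.
have ds01 := dd01 Vs.
have HP : forall x, \prod_v H v x = P x.
  by move=> x; rewrite /P (partition_big p predT).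
rewrite (big_setD1 Vs VsG) -/G' -/D'.
rewrite (eq_avg (G := fun x => ind Vs x * P x)); last first.
  by move=> x; rewrite (big_setD1 Vs VsG).
have e : avg (fun x => ind Vs x * P x) = avg (fun x => (ind Vs x - ds) * P x) + ds * avg P.
  by rewrite -avgZ -avgD; apply: eq_avg => x /=; ring.
rewrite e.
set A := avg (fun x => (ind Vs x - ds) * P x).
have B1 : `|A| <= c * ds ^+ N.
  pose f := fun y : XV X Vs => (y \in S Vs)%:R - dens R (S Vs).
  have eA : A = avg (fun x => f (restr Vs x) * \prod_v H v x).
    by apply: eq_avg => x; rewrite HP /f /ds dd_dens.
  rewrite eA /ds dd_dens; apply: le_trans (hb VsK).
  apply: (@vonN R U X XUne Vs f H).
  - by rewrite -card_gt0 VsK.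
  - move=> v x; apply/andP; split.
      by apply: prodr_ge0 => V _; case/andP: (ind01 V x).
    by apply: prodr_ile1 => V _; exact: ind01.
  - move=> v x y; apply: eq_bigr => V /andP [VG /eqP pv].
    apply: ind_inv; move: (pP V VG); rewrite pv !inE.
    by case/andP.
  - move=> v x vV; apply: big1 => V /andP [VG /eqP pv].
    by move: (pP V VG); rewrite pv !inE (negbTE vV) andbF.
have B1' : c * ds ^+ N <= c * (ds * D').
  apply: ler_wpM2l => //.
  case/andP: ds01 => d0 d1.
  apply: (@le_trans _ _ (ds ^+ #|G|)).
    apply: ler_wiXn2l => //; exact: leq_trans (max_card _) Nbig.
  rewrite /ds /D' /G' -(big_setD1 Vs VsG) /= -prodr_const.
  apply: ler_prod => V VG; rewrite d0 /=; exact: Vsmin.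
have B2 : ds * `|avg P - D'| <= ds * (c * n%:R * D').
  by apply: ler_wpM2l => //; case/andP: ds01.
have d0 : 0 <= ds by case/andP: ds01.
have : `|A + ds * avg P - ds * D'| <= `|A| + ds * `|avg P - D'|.
  rewrite -addrA -mulrBr; apply: le_trans (ler_normD _ _) _.
  by rewrite lerD2l normrM ger0_norm.
move=> h; apply: le_trans h _.
have -> : c * n.+1%:R * (ds * D') = c * (ds * D') + ds * (c * n%:R * D').
  by rewrite -addn1 natrD; ring.
apply: lerD => //; exact: le_trans B1 B1'.
Qed.
End Main.
Lemma numeric (R : realType) (eps : R) (N : nat) (d : R) :
  0 < eps -> (0 < N)%N -> 0 <= d <= 1 ->
  powR (d / 2) (N + Num.bound (N%:R / eps))%:R <= eps / N%:R * d ^+ N.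
Proof.
move=> e0 N0 /andP[d0 d1]; set M := Num.bound _.
have hM : N%:R / eps < 2%:R ^+ M by apply: upper_nthrootP.
have Nr0 : (0 : R) < N%:R by rewrite ltr0n.
rewrite powR_mulrn ?divr_ge0 // exprMn exprD.
set T := (2 : R) ^+ M.
have T0 : 0 < T by rewrite exprn_gt0.
have hT : N%:R < eps * T by move: hM; rewrite ltr_pdivrMr // mulrC.
have dM : d ^+ M <= 1 by rewrite exprn_ile1.
have dN : 0 <= d ^+ N by rewrite exprn_ge0.
have i2 : ((2 : R)^-1) ^+ (N + M) <= T^-1.
  rewrite exprVn lef_pV2 ?posrE ?exprn_gt0 //.
  by rewrite /T ler_eXn2l ?ler1n ?ltr1n // leq_addl.
have iT : T^-1 <= eps / N%:R.
  by rewrite ler_pdivlMr // ler_pdivrMl //; apply: ltW; rewrite mulrC.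
have i0 : 0 <= ((2 : R)^-1) ^+ (N + M) by rewrite exprn_ge0 // invr_ge0.
have dM0 : 0 <= d ^+ M by rewrite exprn_ge0.
rewrite -mulrA [eps / _ * _]mulrC; apply: ler_wpM2l => //.
apply: (@le_trans _ _ (1 * ((2 : R)^-1) ^+ (N + M))).
  by rewrite ler_wpM2r.
by rewrite mul1r; apply: le_trans iT.
Qed.

Lemma XUne_of (U : finType) (X : U -> finType) :
  (forall u, (0 < #|X u|)%N) -> (0 < #|XU X|)%N.
Proof.
move=> hX; rewrite card_dep_ffun /image_mem.
by elim: (enum_mem _) => //= a s IH; rewrite muln_gt0 hX IH.
Qed.

Theorem corollary4p5 (R : realType) (eps : R) (k : nat) (U : finType) :
  0 < eps -> (1 <= k)%N -> (k <= #|U|)%N ->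
  exists C1 : R,
    forall (X : U -> finType) (S : forall V : {set U}, {set XV X V}),
      (forall u, (0 < #|X u|)%N) ->
      (forall V : {set U}, #|V| = k ->
         boxnorm (fun y : XV X V => (y \in S V)%:R - dens R (S V))
           <= powR (dens R (S V) / 2) C1) ->
      `| avg (fun x : XU X => \prod_(V : {set U} | #|V| == k) ((restr V x \in S V)%:R : R))
         - \prod_(V : {set U} | #|V| == k) avg (fun y : XV X V => ((y \in S V)%:R : R)) |
      <= eps * \prod_(V : {set U} | #|V| == k) avg (fun y : XV X V => ((y \in S V)%:R : R)).
Proof.
move=> e0 k1 kU.
pose N := #|{: {set U}}|.
have N0 : (0 < N)%N by apply/card_gt0P; exists finset.set0.
exists (N + Num.bound (N%:R / eps))%:R => X S hX hyp.
have XUne := XUne_of hX.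
pose c := eps / N%:R.
have c0 : 0 <= c by rewrite divr_ge0 ?ler0n // ltW.
have hb : forall V : {set U}, #|V| = k ->
  boxnorm (fun y : XV X V => (y \in S V)%:R - dens R (S V)) <= c * dens R (S V) ^+ N.
  move=> V hV; apply: le_trans (hyp V hV) _.
  apply: numeric => //; rewrite -dd_dens; exact: dd01.
pose G := [set V : {set U} | #|V| == k].
have eG : forall F : {set U} -> R, \prod_(V in G) F V = \prod_(V : {set U} | #|V| == k) F V.
  by move=> F; apply: eq_bigl => V; rewrite inE.
have := @claim R U X XUne S k N c c0 (leqnn N) k1 hb #|G| G erefl.
have hk : forall V, V \in G -> #|V| = k by move=> V; rewrite inE => /eqP.
move=> /(_ hk).
rewrite eG (eq_avg (G := fun x => \prod_(V : {set U} | #|V| == k) @ind R U X S V x)); last first.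
  by move=> x; rewrite eG.
move=> h; apply: le_trans h _.
rewrite -eG /dd.
have P0 : 0 <= \prod_(V in G) @dd R U X S V.
  by apply: prodr_ge0 => V _; case/andP: (@dd01 R U X XUne S V).
rewrite eG in P0 *.
apply: ler_wpM2r => //.
rewrite /c -mulrA -[X in _ <= X](mulr1 eps); apply: ler_wpM2l; first exact: ltW.
rewrite mulrC ler_pdivrMr ?ltr0n // mul1r ler_nat.
exact: max_card.
Qed.
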